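(* Let $n,r\ge 1$, ${\bf A}\in\mathbb{H}^n$, $g\in\mathcal{G}$, and ${\bf X}_0\in\mathbb{C}^{n\times r}$. Put ${\bf W}_0={\bf X}_0^{\mathrm H}{\bf A}{\bf X}_0$ and ${\bf G}=\nabla g({\bf W}_0)\in\mathbb{H}^r$. Define ${\bf L}({\bf X})$ by $${\bf L}({\bf X})={\bf X}^{\mathrm H}{\bf A}^{(-)}{\bf X}+{\bf X}^{\mathrm H}{\bf A}^{(+)}{\bf X}_0+{\bf X}_0^{\mathrm H}{\bf A}^{(+)}{\bf X}-{\bf X}_0^{\mathrm H}{\bf A}^{(+)}{\bf X}_0\quad\text{if } g \text{ is MND},$$ $${\bf L}({\bf X})={\bf X}^{\mathrm H}{\bf A}^{(+)}{\bf X}+{\bf X}^{\mathrm H}{\bf A}^{(-)}{\bf X}_0+{\bf X}_0^{\mathrm H}{\bf A}^{(-)}{\bf X}-{\bf X}_0^{\mathrm H}{\bf A}^{(-)}{\bf X}_0\quad\text{if } g \text{ is MNI},$$ and $$l({\bf X};{\bf X}_0)=\mathrm{tr}\big({\bf L}({\bf X})^{\mathrm H}{\bf G}\big)+g({\bf W}_0)-\mathrm{tr}({\bf W}_0{\bf G}),\qquad {\bf X}\in\mathbb{C}^{n\times r}.$$ Then: (i) $l(\cdot;{\bf X}_0)$ is a real-valued concave function on $\mathbb{C}^{n\times r}$ (viewed as a real vector space); (ii) $l({\bf X};{\bf X}_0)\le g({\bf X}^{\mathrm H}{\bf A}{\bf X})$ for all ${\bf X}\in\mathbb{C}^{n\times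 r}$; (iii) $l({\bf X}_0;{\bf X}_0)=g({\bf X}_0^{\mathrm H}{\bf A}{\bf X}_0)$; (iv) the functions ${\bf X}\mapsto l({\bf X};{\bf X}_0)$ and ${\bf X}\mapsto g({\bf X}^{\mathrm H}{\bf A}{\bf X})$ have the same (real Fréchet) derivative at ${\bf X}={\bf X}_0$.
   Context: $\mathbb{H}^m$ denotes the real vector space of $m\times m$ complex Hermitian matrices, with inner product $\langle{\bf U},{\bf V}\rangle=\mathrm{tr}({\bf U}{\bf V})$; ${\bf U}\succeq{\bf V}$ means ${\bf U}-{\bf V}$ is positive semidefinite. For ${\bf A}\in\mathbb{H}^n$ with eigen-decomposition ${\bf A}=\sum_i\lambda_i{\bf u}_i{\bf u}_i^{\mathrm H}$ (orthonormal ${\bf u}_i$), ${\bf A}^{(+)}=\sum_{\lambda_i>0}\lambda_i{\bf u}_i{\bf u}_i^{\mathrm H}$ and ${\bf A}^{(-)}=\sum_{\lambda_i<0}\lambda_i{\bf u}_i{\bf u}_i^{\mathrm H}$, so ${\bf A}={\bf A}^{(+)}+{\bf A}^{(-)}$. A function $g:\mathbb{H}^r\to\mathbb{R}$ is MND (matrix nondecreasing) if ${\bf W}_1\succeq{\bf W}_2\Rightarrow g({\bf W}_1)\ge g({\bf W}_2)$, and MNI (matrix nonincreasing) if ${\bf W}_1\succeq{\bf W}_2\Rightarrow g({\bf W}_1)\le g({\bf W}_2)$. $\mathcal{G}$ is the family of differentiable convex functions $g:\mathbb{H}^r\to\mathbb{R}$ that are MND or MNI. For differentiable $g$, $\nabla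 g({\bf W}_0)\in\mathbb{H}^r$ denotes its gradient with respect to the inner product above, i.e. $g({\bf W}_0+\Delta)=g({\bf W}_0)+\mathrm{tr}(\nabla g({\bf W}_0)\Delta)+o(\|\Delta\|)$ for $\Delta\in\mathbb{H}^r$. *)

(* Defs.v *)
From HB Require Import structures.
From mathcomp Require Import all_boot all_order all_algebra.
From mathcomp Require Import complex.
From mathcomp Require Import reals.
Set Implicit Arguments.
Unset Strict Implicit.
Unset Printing Implicit Defensive.
Import Order.TTheory GRing.Theory Num.Theory.
Local Open Scope ring_scope.

Section Defs.
Variable R : realType.
Local Notation C := R[i].

Definition ctr m n (M : 'M[C]_(m, n)) : 'M[C]_(n, m) := (map_mx Num.conj M)^T.

Definition is_hermitian m (M : 'M[C]_m) : Prop := ctr M = M.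

Definition psd m (M : 'M[C]_m) : Prop :=
  is_hermitian M /\ forall v : 'cV[C]_m, 0 <= (ctr v *m M *m v) 0 0.

Definition loewner_ge m (U V : 'M[C]_m) : Prop := psd (U - V).

(* g : H^r -> R (represented on all r x r matrices; only Hermitian arguments matter) *)
Definition MND r (g : 'M[C]_r -> R) : Prop :=
  forall W1 W2, is_hermitian W1 -> is_hermitian W2 -> loewner_ge W1 W2 -> g W1 >= g W2.

Definition MNI r (g : 'M[C]_r -> R) : Prop :=
  forall W1 W2, is_hermitian W1 -> is_hermitian W2 -> loewner_ge W1 W2 -> g W1 <= g W2.

Definition convex_on_H r (g : 'M[C]_r -> R) : Prop :=
  forall (U V : 'M[C]_r) (t : R), is_hermitian U -> is_hermitian V -> 0 <= t <= 1 ->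
    g (((1 - t)%:C)%C *: U + (t%:C)%C *: V) <= (1 - t) * g U + t * g V.

Definition fnorm m n (M : 'M[C]_(m, n)) : R :=
  Num.sqrt (\sum_(i < m) \sum_(j < n) (complex.Re (M i j) ^+ 2 + complex.Im (M i j) ^+ 2)).

(* G = ∇g(W0) w.r.t. <U,V> = tr(UV) on H^r :
   g(W0 + Δ) = g(W0) + tr(G Δ) + o(‖Δ‖), Δ ∈ H^r *)
Definition is_gradient r (g : 'M[C]_r -> R) (W0 G : 'M[C]_r) : Prop :=
  is_hermitian G /\
  forall eps : R, 0 < eps -> exists2 delta : R, 0 < delta &
    forall D : 'M[C]_r, is_hermitian D -> fnorm D < delta ->
      `| g (W0 + D) - g W0 - complex.Re (\tr (G *m D)) | <= eps * fnorm D.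

Definition differentiable_on_H r (g : 'M[C]_r -> R) : Prop :=
  forall W, is_hermitian W -> exists G, is_gradient g W G.

Definition in_class_G r (g : 'M[C]_r -> R) : Prop :=
  differentiable_on_H g /\ convex_on_H g /\ (MND g \/ MNI g).

Definition real_linear m n (D : 'M[C]_(m, n) -> R) : Prop :=
  forall (a : R) (X Y : 'M[C]_(m, n)), D ((a%:C)%C *: X + Y) = a * D X + D Y.

Definition frechet_deriv m n (f : 'M[C]_(m, n) -> R) (X0 : 'M[C]_(m, n))
  (D : 'M[C]_(m, n) -> R) : Prop :=
  real_linear D /\
  forall eps : R, 0 < eps -> exists2 delta : R, 0 < delta &
    forall X : 'M[C]_(m, n), fnorm (X - X0) < delta ->
      `| f X - f X0 - D (X - X0) | <= eps * fnorm (X - X0).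

Definition concave_fun m n (f : 'M[C]_(m, n) -> R) : Prop :=
  forall (X Y : 'M[C]_(m, n)) (t : R), 0 <= t <= 1 ->
    (1 - t) * f X + t * f Y <= f (((1 - t)%:C)%C *: X + (t%:C)%C *: Y).

Definition eigen_decomp m (A U : 'M[C]_m) (lam : 'I_m -> R) : Prop :=
  ctr U *m U = 1%:M /\
  A = \sum_(i < m) ((lam i)%:C)%C *: (col i U *m ctr (col i U)).

Definition pos_part m (U : 'M[C]_m) (lam : 'I_m -> R) : 'M[C]_m :=
  \sum_(i < m | 0 < lam i) ((lam i)%:C)%C *: (col i U *m ctr (col i U)).

Definition neg_part m (U : 'M[C]_m) (lam : 'I_m -> R) : 'M[C]_m :=
  \sum_(i < m | lam i < 0) ((lam i)%:C)%C *: (col i U *m ctr (col i U)).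

(* L(X): mnd = true is the MND case, mnd = false the MNI case *)
Definition Lmx n r (mnd : bool) (Ap An : 'M[C]_n) (X0 X : 'M[C]_(n, r)) : 'M[C]_r :=
  if mnd then
    ctr X *m An *m X + ctr X *m Ap *m X0 + ctr X0 *m Ap *m X - ctr X0 *m Ap *m X0
  else
    ctr X *m Ap *m X + ctr X *m An *m X0 + ctr X0 *m An *m X - ctr X0 *m An *m X0.

Definition lmin n r (g : 'M[C]_r -> R) (mnd : bool) (Ap An : 'M[C]_n)
  (X0 : 'M[C]_(n, r)) (W0 G : 'M[C]_r) (X : 'M[C]_(n, r)) : C :=
  \tr (ctr (Lmx mnd Ap An X0 X) *m G) + ((g W0)%:C)%C - \tr (W0 *m G).

End Defs.

(* Main.v *)
Require Import Defs.
From HB Require Import structures.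
From mathcomp Require Import all_boot all_order all_algebra.
From mathcomp Require Import complex.
From mathcomp Require Import reals.
From mathcomp Require Import ring lra.
Import Order.TTheory GRing.Theory Num.Theory.
Local Open Scope ring_scope.
Set Implicit Arguments.
Unset Strict Implicit.

Section S.
Variable R : realType.
Local Notation C := R[i].

Lemma ReD (x y : C) : complex.Re (x + y) = complex.Re x + complex.Re y.
Proof. by case: x; case: y. Qed.
Lemma ImD (x y : C) : complex.Im (x + y) = complex.Im x + complex.Im y.
Proof. by case: x; case: y. Qed.
Lemma ReN (x : C) : complex.Re (- x) = - complex.Re x.
Proof. by case: x. Qed.
Lemma ImN (x : C) : complex.Im (- x) = - complex.Im x.
Proof. by case: x. Qed.
Lemma ReB (x y : C) : complex.Re (x - y) = complex.Re x - complex.Re y.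
Proof. by rewrite ReD ReN. Qed.
Lemma ImB (x y : C) : complex.Im (x - y) = complex.Im x - complex.Im y.
Proof. by rewrite ImD ImN. Qed.
Lemma ReM (x y : C) : complex.Re (x * y) = complex.Re x * complex.Re y - complex.Im x * complex.Im y.
Proof. by case: x; case: y. Qed.
Lemma ImM (x y : C) : complex.Im (x * y) = complex.Re x * complex.Im y + complex.Im x * complex.Re y.
Proof. by case: x; case: y. Qed.
Lemma ReJ (x : C) : complex.Re (Num.conj x) = complex.Re x.
Proof. by case: x. Qed.
Lemma ImJ (x : C) : complex.Im (Num.conj x) = - complex.Im x.
Proof. by case: x. Qed.
Lemma Re0 : complex.Re (0 : C) = 0. Proof. by []. Qed.
Lemma Im0 : complex.Im (0 : C) = 0. Proof. by []. Qed.
Lemma ReC (a : R) : complex.Re ((a%:C)%C : C) = a. Proof. by []. Qed.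
Lemma ImC (a : R) : complex.Im ((a%:C)%C : C) = 0. Proof. by []. Qed.
Lemma ReCM (a : R) (x : C) : complex.Re ((a%:C)%C * x) = a * complex.Re x.
Proof. by rewrite ReM ReC ImC mul0r subr0. Qed.
Lemma ImCM (a : R) (x : C) : complex.Im ((a%:C)%C * x) = a * complex.Im x.
Proof. by rewrite ImM ReC ImC mul0r addr0. Qed.
Lemma Re_sum I (s : seq I) (P : pred I) (F : I -> C) :
  complex.Re (\sum_(i <- s | P i) F i) = \sum_(i <- s | P i) complex.Re (F i).
Proof. exact: (big_morph _ ReD Re0). Qed.
Lemma Im_sum I (s : seq I) (P : pred I) (F : I -> C) :
  complex.Im (\sum_(i <- s | P i) F i) = \sum_(i <- s | P i) complex.Im (F i).
Proof. exact: (big_morph _ ImD Im0). Qed.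
Lemma conjCr (a : R) : Num.conj ((a%:C)%C : C) = (a%:C)%C.
Proof. by apply/eqP; rewrite eq_complex /= oppr0 !eqxx. Qed.
Lemma complex_eqRI (x : C) : complex.Im x = 0 -> x = ((complex.Re x)%:C)%C.
Proof. by case: x => a b /= ->. Qed.

Lemma ctrE m n (M : 'M[C]_(m, n)) i j : ctr M i j = Num.conj (M j i).
Proof. by rewrite /ctr !mxE. Qed.

Lemma ctrM m n p (M : 'M[C]_(m, n)) (N : 'M[C]_(n, p)) :
  ctr (M *m N) = ctr N *m ctr M.
Proof.
apply/matrixP => i j; rewrite ctrE !mxE rmorph_sum; apply: eq_bigr => k _.
rewrite ?ctrE ?mxE rmorphM mulrC. done.
Qed.
Lemma ctrD m n (M N : 'M[C]_(m, n)) : ctr (M + N) = ctr M + ctr N.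
Proof. by apply/matrixP => i j; rewrite ?ctrE !mxE ?ctrE ?mxE rmorphD. Qed.
Lemma ctrN m n (M : 'M[C]_(m, n)) : ctr (- M) = - ctr M.
Proof. by apply/matrixP => i j; rewrite ?ctrE !mxE ?ctrE ?mxE rmorphN. Qed.
Lemma ctrB m n (M N : 'M[C]_(m, n)) : ctr (M - N) = ctr M - ctr N.
Proof. by rewrite ctrD ctrN. Qed.
Lemma ctr0 m n : ctr (0 : 'M[C]_(m, n)) = 0.
Proof. by apply/matrixP => i j; rewrite ?ctrE !mxE ?ctrE ?mxE rmorph0. Qed.
Lemma ctrK m n (M : 'M[C]_(m, n)) : ctr (ctr M) = M.
Proof. by apply/matrixP => i j; rewrite !ctrE conjCK. Qed.
Lemma ctrZ m n (a : R) (M : 'M[C]_(m, n)) : ctr ((a%:C)%C *: M) = (a%:C)%C *: ctr M.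
Proof. apply/matrixP => i j; rewrite ?ctrE !mxE ?ctrE ?mxE rmorphM. congr (_ * _). exact: conjCr. Qed.
Lemma ctr_sum m n I (s : seq I) (P : pred I) (F : I -> 'M[C]_(m, n)) :
  ctr (\sum_(i <- s | P i) F i) = \sum_(i <- s | P i) ctr (F i).
Proof. exact: (big_morph _ (@ctrD m n) (@ctr0 m n)). Qed.
Lemma tr_ctr n (M : 'M[C]_n) : \tr (ctr M) = Num.conj (\tr M).
Proof. rewrite /mxtrace rmorph_sum; apply: eq_bigr => i _; by rewrite ctrE. Qed.


Lemma mxtraceN n (M : 'M[C]_n) : \tr (- M) = - \tr M.
Proof. by rewrite /mxtrace -sumrN; apply: eq_bigr => i _; rewrite mxE. Qed.

Lemma Im_herm_tr n (L G : 'M[C]_n) : is_hermitian L -> is_hermitian G ->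
  complex.Im (\tr (L *m G)) = 0.
Proof.
move=> hL hG.
have h : Num.conj (\tr (L *m G)) = \tr (L *m G).
  by rewrite -tr_ctr ctrM hG hL mxtrace_mulC.
have := congr1 (@complex.Im R) h; rewrite ImJ => e; lra.
Qed.

Lemma herm_quad n r (X Y : 'M[C]_(n, r)) (M : 'M[C]_n) : is_hermitian M ->
  ctr (ctr X *m M *m Y) = ctr Y *m M *m X.
Proof. by move=> hM; rewrite !ctrM ctrK hM mulmxA. Qed.

Lemma concave_id (a b c d t : R) :
  (1 - t) * ((1 - t) * a + t * b) + t * ((1 - t) * c + t * d) =
  (1 - t) * a + t * d - t * (1 - t) * (a + - b + (- c + - - d)).
Proof. ring. Qed.

Section Bil.
Variables (n r : nat) (G : 'M[C]_r).
Definition Bf (M : 'M[C]_n) (X Y : 'M[C]_(n, r)) : R :=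
  complex.Re (\tr (G *m (ctr X *m M *m Y))).

Lemma BfDl M X1 X2 Y : Bf M (X1 + X2) Y = Bf M X1 Y + Bf M X2 Y.
Proof. by rewrite /Bf ctrD !mulmxDl mulmxDr mxtraceD ReD. Qed.
Lemma BfDr M X Y1 Y2 : Bf M X (Y1 + Y2) = Bf M X Y1 + Bf M X Y2.
Proof. by rewrite /Bf !mulmxDr mxtraceD ReD. Qed.
Lemma BfDm M1 M2 X Y : Bf (M1 + M2) X Y = Bf M1 X Y + Bf M2 X Y.
Proof. by rewrite /Bf !mulmxDr mulmxDl mulmxDr mxtraceD ReD. Qed.
Lemma BfNl M X Y : Bf M (- X) Y = - Bf M X Y.
Proof. by rewrite /Bf ctrN !mulNmx mulmxN mxtraceN ReN. Qed.
Lemma BfNr M X Y : Bf M X (- Y) = - Bf M X Y.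
Proof. by rewrite /Bf !mulmxN mxtraceN ReN. Qed.
Lemma BfNm M X Y : Bf (- M) X Y = - Bf M X Y.
Proof. by rewrite /Bf mulmxN mulNmx mulmxN mxtraceN ReN. Qed.
Lemma BfBl M X1 X2 Y : Bf M (X1 - X2) Y = Bf M X1 Y - Bf M X2 Y.
Proof. by rewrite BfDl BfNl. Qed.
Lemma BfBr M X Y1 Y2 : Bf M X (Y1 - Y2) = Bf M X Y1 - Bf M X Y2.
Proof. by rewrite BfDr BfNr. Qed.
Lemma BfZl M (a : R) X Y : Bf M ((a%:C)%C *: X) Y = a * Bf M X Y.
Proof. by rewrite /Bf ctrZ -!scalemxAl -scalemxAr mxtraceZ ReCM. Qed.
Lemma BfZr M (a : R) X Y : Bf M X ((a%:C)%C *: Y) = a * Bf M X Y.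
Proof. by rewrite /Bf -!scalemxAr mxtraceZ ReCM. Qed.

Lemma Bf_concave M X Y (t : R) :
  Bf M (((1 - t)%:C)%C *: X + (t%:C)%C *: Y) (((1 - t)%:C)%C *: X + (t%:C)%C *: Y)
  = (1 - t) * Bf M X X + t * Bf M Y Y - t * (1 - t) * Bf M (X - Y) (X - Y).
Proof.
rewrite !(BfDl, BfDr, BfNl, BfNr, BfZl, BfZr).
exact: concave_id.
Qed.
End Bil.

Lemma mx11M m (A : 'M[C]_(1, m)) (B : 'M[C]_(m, 1)) :
  (A *m B) 0 0 = \sum_(k < m) A 0 k * B k 0.
Proof. by rewrite mxE. Qed.

Lemma form_eig n (U : 'M[C]_n) (lam : 'I_n -> R) (P : pred 'I_n) (w : 'cV[C]_n) :
  (ctr w *m (\sum_(i | P i) ((lam i)%:C)%C *: (col i U *m ctr (col i U))) *m w) 0 0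
  = \sum_(i | P i) ((lam i)%:C)%C *
      ((ctr w *m col i U) 0 0 * Num.conj ((ctr w *m col i U) 0 0)).
Proof.
rewrite mulmx_sumr mulmx_suml summxE; apply: eq_bigr => i _.
rewrite -scalemxAr -scalemxAl mxE; congr (_ * _).
rewrite mulmxA -(mulmxA (ctr w *m col i U)).
have -> : ctr (col i U) *m w = ctr (ctr w *m col i U) by rewrite ctrM ctrK.
by rewrite mx11M big_ord1 ctrE.
Qed.

Lemma eig_herm n (U : 'M[C]_n) (lam : 'I_n -> R) (P : pred 'I_n) :
  is_hermitian (\sum_(i | P i) ((lam i)%:C)%C *: (col i U *m ctr (col i U))).
Proof.
rewrite /is_hermitian ctr_sum; apply: eq_bigr => i _.
by rewrite ctrZ ctrM ctrK.
Qed.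

Lemma quad_herm n r (Y : 'M[C]_(n, r)) (M : 'M[C]_n) : is_hermitian M ->
  is_hermitian (ctr Y *m M *m Y).
Proof. by move=> hM; rewrite /is_hermitian herm_quad. Qed.

Lemma quad_form n r (Y : 'M[C]_(n, r)) (M : 'M[C]_n) (v : 'cV[C]_r) :
  ctr v *m (ctr Y *m M *m Y) *m v = ctr (Y *m v) *m M *m (Y *m v).
Proof. by rewrite ctrM !mulmxA. Qed.

Lemma psd_pos n r (U : 'M[C]_n) (lam : 'I_n -> R) (Y : 'M[C]_(n, r)) :
  psd (ctr Y *m pos_part U lam *m Y).
Proof.
split; first exact/quad_herm/eig_herm.
move=> v; rewrite quad_form /pos_part form_eig.
apply: sumr_ge0 => i hi; apply: mulr_ge0; first by rewrite ler0c ltW.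
exact: mulcJ_ge0.
Qed.

Lemma psd_neg n r (U : 'M[C]_n) (lam : 'I_n -> R) (Y : 'M[C]_(n, r)) :
  psd (- (ctr Y *m neg_part U lam *m Y)).
Proof.
split; first by rewrite /is_hermitian ctrN; congr (- _); exact/quad_herm/eig_herm.
move=> v; rewrite mulmxN mulNmx mxE quad_form /neg_part form_eig -sumrN.
apply: sumr_ge0 => i hi; rewrite -mulNr; apply: mulr_ge0; last exact: mulcJ_ge0.
have -> : - ((lam i)%:C)%C = ((- lam i)%:C)%C :> C.
  by apply/eqP; rewrite eq_complex /= oppr0 !eqxx.
by rewrite ler0c oppr_ge0 ltW.
Qed.

Lemma eig_split n (A U : 'M[C]_n) (lam : 'I_n -> R) :
  eigen_decomp A U lam -> A = pos_part U lam + neg_part U lam.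
Proof.
case=> _ ->; rewrite (bigID (fun i => 0 < lam i)) /=; congr (_ + _).
rewrite (bigID (fun i => lam i < 0)) /= [X in _ + X]big1 ?addr0.
  by apply: eq_bigl => i; case: (ltrgtP (lam i) 0).
move=> i /andP [h1 h2].
have -> : lam i = 0 by case: (ltrgtP (lam i) 0) h1 h2.
by rewrite scale0r.
Qed.

Lemma le_of_eps (a b c : R) : 0 <= c ->
  (forall eps, 0 < eps -> a <= b + eps * c) -> a <= b.
Proof.
move=> c0 h; apply/ler_addgt0Pr => e e0.
have c1 : 0 < c + 1 by lra.
have := h (e / (c + 1)) (divr_gt0 e0 c1).
have : e / (c + 1) * c <= e.
  rewrite mulrAC ler_pdivrMr // ler_pM2l //; lra.
move=> h1 h2; lra.
Qed.

Lemma fnorm_ge0 m n (M : 'M[C]_(m, n)) : 0 <= fnorm M.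
Proof. exact: sqrtr_ge0. Qed.

Lemma fnormZ m n (t : R) (M : 'M[C]_(m, n)) : 0 <= t ->
  fnorm ((t%:C)%C *: M) = t * fnorm M.
Proof.
move=> t0; rewrite /fnorm.
have -> : \sum_(i < m) \sum_(j < n)
    (complex.Re (((t%:C)%C *: M) i j) ^+ 2 + complex.Im (((t%:C)%C *: M) i j) ^+ 2)
  = t ^+ 2 * \sum_(i < m) \sum_(j < n) (complex.Re (M i j) ^+ 2 + complex.Im (M i j) ^+ 2).
  rewrite mulr_sumr; apply: eq_bigr => i _; rewrite mulr_sumr; apply: eq_bigr => j _.
  rewrite mxE ReCM ImCM; ring.
by rewrite sqrtrM ?sqrtr_sqr ?ger0_norm // sqr_ge0.
Qed.

Lemma herm_scale n (t : R) (M : 'M[C]_n) : is_hermitian M -> is_hermitian ((t%:C)%C *: M).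
Proof. by move=> h; rewrite /is_hermitian ctrZ h. Qed.

Lemma psd_scale n (t : R) (M : 'M[C]_n) : 0 <= t -> psd M -> psd ((t%:C)%C *: M).
Proof.
move=> t0 [h1 h2]; split; first exact: herm_scale.
move=> v; rewrite -scalemxAr -scalemxAl mxE; apply: mulr_ge0; last exact: h2.
by rewrite ler0c.
Qed.

Lemma herm_add n (M N : 'M[C]_n) : is_hermitian M -> is_hermitian N -> is_hermitian (M + N).
Proof. by move=> h1 h2; rewrite /is_hermitian ctrD h1 h2. Qed.
Lemma herm_sub n (M N : 'M[C]_n) : is_hermitian M -> is_hermitian N -> is_hermitian (M - N).
Proof. by move=> h1 h2; rewrite /is_hermitian ctrB h1 h2. Qed.

Lemma ReTrZ r (G D : 'M[C]_r) (t : R) :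
  complex.Re (\tr (G *m ((t%:C)%C *: D))) = t * complex.Re (\tr (G *m D)).
Proof. by rewrite -scalemxAr mxtraceZ ReCM. Qed.

Lemma grad_dir r (g : 'M[C]_r -> R) W0 G D : is_gradient g W0 G -> is_hermitian D ->
  forall eps, 0 < eps -> exists t : R, [/\ 0 < t, t <= 1 &
   `| g (W0 + (t%:C)%C *: D) - g W0 - t * complex.Re (\tr (G *m D)) | <= eps * (t * fnorm D)].
Proof.
move=> [_ hg] hD eps e0; have [delta d0 hd] := hg eps e0.
set f := fnorm D; have f0 : 0 <= f := fnorm_ge0 D.
have f1 : 0 < f + 1 by lra.
pose t := Num.min 1 (delta / (f + 1)).
have t0 : 0 < t by rewrite lt_min ltr01 divr_gt0.
have t1 : t <= 1 by rewrite ge_min lexx.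
have t2 : t <= delta / (f + 1) by rewrite ge_min lexx orbT.
exists t; split => //.
rewrite -ReTrZ -(fnormZ _ (ltW t0)); apply: hd; first exact: herm_scale.
rewrite fnormZ ?(ltW t0) //.
have : t * f <= delta / (f + 1) * f by apply: ler_wpM2r.
have : delta / (f + 1) * f < delta.
  rewrite mulrAC ltr_pdivrMr // ltr_pM2l //; lra.
move=> h1 h2; rewrite -/f; lra.
Qed.

Lemma grad_sign_MND r (g : 'M[C]_r -> R) W0 G P : MND g -> is_gradient g W0 G ->
  is_hermitian W0 -> psd P -> 0 <= complex.Re (\tr (G *m P)).
Proof.
move=> hm hg hW hP; apply: (@le_of_eps _ _ (fnorm P)); first exact: fnorm_ge0.
move=> eps e0; have [t [t0 t1 h]] := grad_dir hg hP.1 e0.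
have hge : g W0 <= g (W0 + (t%:C)%C *: P).
  apply: hm; [exact: herm_add (herm_scale _ hP.1)| done|].
  rewrite /loewner_ge addrC addKr; exact: psd_scale (ltW t0) hP.
move: h; set a := complex.Re _; set k := fnorm P.
rewrite ler_norml => /andP [h1 h2].
have : t * (- (eps * k)) <= t * a by nra.
rewrite ler_pM2l //; lra.
Qed.

Lemma grad_sign_MNI r (g : 'M[C]_r -> R) W0 G P : MNI g -> is_gradient g W0 G ->
  is_hermitian W0 -> psd P -> complex.Re (\tr (G *m P)) <= 0.
Proof.
move=> hm hg hW hP; apply: (@le_of_eps _ _ (fnorm P)); first exact: fnorm_ge0.
move=> eps e0; have [t [t0 t1 h]] := grad_dir hg hP.1 e0.
have hge : g (W0 + (t%:C)%C *: P) <= g W0.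
  apply: hm; [exact: herm_add (herm_scale _ hP.1)| done|].
  rewrite /loewner_ge addrC addKr; exact: psd_scale (ltW t0) hP.
move: h; set a := complex.Re _; set k := fnorm P.
rewrite ler_norml => /andP [h1 h2].
have : t * a <= t * (eps * k) by nra.
rewrite ler_pM2l //; lra.
Qed.

Lemma grad_convex r (g : 'M[C]_r -> R) W0 G W : convex_on_H g -> is_gradient g W0 G ->
  is_hermitian W0 -> is_hermitian W ->
  g W0 + complex.Re (\tr (G *m (W - W0))) <= g W.
Proof.
move=> hc hg hW0 hW.
have hD : is_hermitian (W - W0) by exact: herm_sub.
apply: (@le_of_eps _ _ (fnorm (W - W0))); first exact: fnorm_ge0.
move=> eps e0; have [t [t0 t1 h]] := grad_dir hg hD e0.
have hcv := hc W0 W t hW0 hW.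
have e : ((1 - t)%:C)%C *: W0 + (t%:C)%C *: W = W0 + (t%:C)%C *: (W - W0).
  have -> : ((1 - t)%:C)%C = 1 - (t%:C)%C :> C.
    by apply/eqP; rewrite eq_complex /= subr0 !eqxx.
  by rewrite scalerBl scale1r scalerBr addrAC addrA.
rewrite e in hcv.
have := hcv; rewrite (ltW t0) t1 => /(_ isT).
move: h; set a := complex.Re _; set k := fnorm _; set gt := g (W0 + _).
rewrite ler_norml => /andP [h1 h2] h3.
have : t * (a - g W + g W0) <= t * (eps * k) by nra.
rewrite ler_pM2l //; lra.
Qed.

Definition nc (z : C) : R := `|complex.Re z| + `|complex.Im z|.
Definition n1 m n (M : 'M[C]_(m, n)) : R := \sum_i \sum_j nc (M i j).

Lemma nc_ge0 z : 0 <= nc z.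
Proof. by rewrite /nc addr_ge0. Qed.
Lemma ncD x y : nc (x + y) <= nc x + nc y.
Proof.
rewrite /nc ReD ImD.
have := ler_normD (complex.Re x) (complex.Re y).
have := ler_normD (complex.Im x) (complex.Im y); lra.
Qed.
Lemma ncN x : nc (- x) = nc x.
Proof. by rewrite /nc ReN ImN !normrN. Qed.
Lemma ncJ x : nc (Num.conj x) = nc x.
Proof. by rewrite /nc ReJ ImJ normrN. Qed.
Lemma nc0 : nc 0 = 0.
Proof. by rewrite /nc Re0 Im0 normr0 addr0. Qed.
Lemma ncM x y : nc (x * y) <= nc x * nc y.
Proof.
rewrite /nc ReM ImM.
set a := complex.Re x; set b := complex.Im x; set c := complex.Re y; set d := complex.Im y.
have h1 := ler_normB (a * c) (b * d).
have h2 := ler_normD (a * d) (b * c).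
rewrite !normrM in h1 h2.
have := normr_ge0 a; have := normr_ge0 b; have := normr_ge0 c; have := normr_ge0 d.
nra.
Qed.
Lemma nc_sum I (s : seq I) (P : pred I) (F : I -> C) :
  nc (\sum_(i <- s | P i) F i) <= \sum_(i <- s | P i) nc (F i).
Proof.
apply: (big_ind2 (fun x y => nc x <= y)); first by rewrite nc0.
  by move=> x1 x2 y1 y2 h1 h2; apply: le_trans (ncD _ _) _; exact: lerD.
by [].
Qed.
Lemma Re_le_nc z : `|complex.Re z| <= nc z.
Proof. rewrite /nc; have := normr_ge0 (complex.Im z); lra. Qed.

Lemma ler_term_sum (I : finType) (F : I -> R) i : (forall j, 0 <= F j) -> F i <= \sum_j F j.
Proof.
move=> h; rewrite (bigD1 i) //=.
have : 0 <= \sum_(j | j != i) F j by apply: sumr_ge0.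
lra.
Qed.

Lemma n1_ge0 m n (M : 'M[C]_(m, n)) : 0 <= n1 M.
Proof. by apply: sumr_ge0 => i _; apply: sumr_ge0 => j _; exact: nc_ge0. Qed.

Lemma n1D m n (M N : 'M[C]_(m, n)) : n1 (M + N) <= n1 M + n1 N.
Proof.
rewrite /n1 -big_split /=; apply: ler_sum => i _.
rewrite -big_split /=; apply: ler_sum => j _; rewrite mxE; exact: ncD.
Qed.
Lemma n1N m n (M : 'M[C]_(m, n)) : n1 (- M) = n1 M.
Proof. by apply: eq_bigr => i _; apply: eq_bigr => j _; rewrite mxE ncN. Qed.
Lemma n1_ctr m n (M : 'M[C]_(m, n)) : n1 (ctr M) = n1 M.
Proof.
rewrite /n1 exchange_big /=; apply: eq_bigr => i _; apply: eq_bigr => j _.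
by rewrite ctrE ncJ.
Qed.
Lemma n1M m n p (M : 'M[C]_(m, n)) (N : 'M[C]_(n, p)) : n1 (M *m N) <= n1 M * n1 N.
Proof.
apply: (@le_trans _ _ (\sum_i \sum_k \sum_j nc (M i j) * nc (N j k))).
  apply: ler_sum => i _; apply: ler_sum => k _; rewrite mxE.
  apply: le_trans (nc_sum _ _ _) _; apply: ler_sum => j _; exact: ncM.
rewrite /n1 mulr_suml; apply: ler_sum => i _.
rewrite exchange_big /= mulr_suml; apply: ler_sum => j _.
rewrite -mulr_sumr; apply: ler_wpM2l; first exact: nc_ge0.
apply: (@ler_term_sum _ (fun j0 => \sum_k nc (N j0 k)) j) => j0.
by apply: sumr_ge0 => k _; exact: nc_ge0.
Qed.
Lemma Retr_le_n1 n (M : 'M[C]_n) : `|complex.Re (\tr M)| <= n1 M.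
Proof.
rewrite /mxtrace Re_sum; apply: le_trans (ler_norm_sum _ _ _) _.
apply: ler_sum => i _; apply: le_trans (Re_le_nc _) _.
apply: (@ler_term_sum _ (fun j => nc (M i j)) i) => j; exact: nc_ge0.
Qed.

Lemma sq_sum_le (I : finType) (F : I -> R) : (forall i, 0 <= F i) ->
  \sum_i F i ^+ 2 <= (\sum_i F i) ^+ 2.
Proof.
move=> h; rewrite expr2 mulr_suml; apply: ler_sum => i _.
rewrite expr2; apply: ler_wpM2l => //; exact: ler_term_sum.
Qed.

Lemma fnorm_le_n1 m n (M : 'M[C]_(m, n)) : fnorm M <= n1 M.
Proof.
rewrite /fnorm -(ger0_norm (n1_ge0 M)) -sqrtr_sqr ler_sqrt ?sqr_ge0 //.
apply: (@le_trans _ _ (\sum_i (\sum_j nc (M i j)) ^+ 2)); last first.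
  apply: sq_sum_le => i; apply: sumr_ge0 => j _; exact: nc_ge0.
apply: ler_sum => i _.
apply: (@le_trans _ _ (\sum_j nc (M i j) ^+ 2)); last first.
  apply: sq_sum_le => j; exact: nc_ge0.
apply: ler_sum => j _; rewrite /nc.
rewrite -[complex.Re _ ^+ 2]real_normK ?num_real // -[complex.Im _ ^+ 2]real_normK ?num_real //.
have := normr_ge0 (complex.Re (M i j)); have := normr_ge0 (complex.Im (M i j)); nra.
Qed.

Lemma nc_le_fnorm m n (M : 'M[C]_(m, n)) i j : nc (M i j) <= 2 * fnorm M.
Proof.
have hS : forall x, x ^+ 2 <= \sum_(i < m) \sum_(j < n)
   (complex.Re (M i j) ^+ 2 + complex.Im (M i j) ^+ 2) ->
   `|x| <= fnorm M.
  move=> x hx; rewrite /fnorm -sqrtr_sqr ler_sqrt //.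
  by apply: sumr_ge0 => i0 _; apply: sumr_ge0 => j0 _; rewrite addr_ge0 ?sqr_ge0.
have hij : complex.Re (M i j) ^+ 2 + complex.Im (M i j) ^+ 2 <= \sum_(i < m) \sum_(j < n)
   (complex.Re (M i j) ^+ 2 + complex.Im (M i j) ^+ 2).
  apply: le_trans (@ler_term_sum _ (fun i0 => \sum_(j < n)
   (complex.Re (M i0 j) ^+ 2 + complex.Im (M i0 j) ^+ 2)) i _).
    apply: (@ler_term_sum _ (fun j0 => complex.Re (M i j0) ^+ 2 + complex.Im (M i j0) ^+ 2) j).
    by move=> j0; rewrite addr_ge0 ?sqr_ge0.
  by move=> i0; apply: sumr_ge0 => j0 _; rewrite addr_ge0 ?sqr_ge0.
have h1 := hS (complex.Re (M i j)).
have h2 := hS (complex.Im (M i j)).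
have := sqr_ge0 (complex.Re (M i j)); have := sqr_ge0 (complex.Im (M i j)).
rewrite /nc; move=> a b.
have e1 := h1 ltac:(lra). have e2 := h2 ltac:(lra). lra.
Qed.

Lemma n1_le_fnorm m n (M : 'M[C]_(m, n)) : n1 M <= 2 * (m * n)%:R * fnorm M.
Proof.
apply: (@le_trans _ _ (\sum_(i < m) \sum_(j < n) (2 * fnorm M))).
  by apply: ler_sum => i _; apply: ler_sum => j _; exact: nc_le_fnorm.
rewrite !sumr_const !card_ord -mulrnA -mulr_natr mulnC natrM.
rewrite le_eqVlt; apply/orP; left; apply/eqP; ring.
Qed.

Lemma n1_quad n r (X Y : 'M[C]_(n, r)) (M : 'M[C]_n) :
  n1 (ctr X *m M *m Y) <= n1 X * n1 M * n1 Y.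
Proof.
apply: le_trans (n1M _ _) _; apply: ler_wpM2r; first exact: n1_ge0.
by apply: le_trans (n1M _ _) _; rewrite n1_ctr.
Qed.

Lemma Bf_bound n r (G : 'M[C]_r) (M : 'M[C]_n) (X Y : 'M[C]_(n, r)) :
  `|Bf G M X Y| <= n1 G * (n1 X * n1 M * n1 Y).
Proof.
apply: le_trans (Retr_le_n1 _) _; apply: le_trans (n1M _ _) _.
apply: ler_wpM2l; first exact: n1_ge0.
exact: n1_quad.
Qed.

Lemma frechet_quad n r (f : 'M[C]_(n, r) -> R) X0 D (K : R) : real_linear D -> 0 <= K ->
  (forall X, `|f X - f X0 - D (X - X0)| <= K * fnorm (X - X0) ^+ 2) ->
  frechet_deriv f X0 D.
Proof.
move=> hl K0 h; split => // eps e0.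
have K1 : 0 < K + 1 by lra.
exists (eps / (K + 1)); first exact: divr_gt0.
move=> X hX; apply: le_trans (h X) _.
set x := fnorm (X - X0) in hX *; have x0 : 0 <= x := fnorm_ge0 _.
have : K * x <= eps.
  apply: (@le_trans _ _ ((K + 1) * x)); first by nra.
  by rewrite mulrC -ler_pdivlMr // ltW.
move=> hk; rewrite expr2 mulrA; apply: ler_wpM2r => //.
Qed.

Lemma quad_expand n r (H X0 : 'M[C]_(n, r)) (A : 'M[C]_n) :
  ctr (H + X0) *m A *m (H + X0) - ctr X0 *m A *m X0
  = ctr X0 *m A *m H + ctr H *m A *m X0 + ctr H *m A *m H.
Proof.
rewrite ctrD !mulmxDl !mulmxDr addrA addrK.
by rewrite addrC (addrC (ctr H *m A *m H)) addrA.
Qed.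

Lemma ReTr3 r (G M1 M2 M3 : 'M[C]_r) :
  complex.Re (\tr (G *m (M1 + M2 + M3))) = complex.Re (\tr (G *m M1))
    + complex.Re (\tr (G *m M2)) + complex.Re (\tr (G *m M3)).
Proof. by rewrite !mulmxDr !mxtraceD !ReD. Qed.

Lemma frechet_comp n r (g : 'M[C]_r -> R) (A : 'M[C]_n) (X0 : 'M[C]_(n, r)) G :
  is_hermitian A -> is_gradient g (ctr X0 *m A *m X0) G ->
  frechet_deriv (fun X => g (ctr X *m A *m X)) X0 (fun H => Bf G A X0 H + Bf G A H X0).
Proof.
move=> hA hg; split.
  by move=> a X Y /=; rewrite BfDr BfZr BfDl BfZl mulrDr addrACA.
move=> eps e0.
set W0 := ctr X0 *m A *m X0.
pose c : R := 2 * (n * r)%:R; have c0 : 0 <= c by rewrite mulr_ge0 ?ler0n.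
set x1 := n1 X0; set a1 := n1 A; set g1 := n1 G.
have x10 : 0 <= x1 := n1_ge0 _. have a10 : 0 <= a1 := n1_ge0 _.
have g10 : 0 <= g1 := n1_ge0 _.
set c1 := (2 * x1 * a1 + a1) * c.
have c10 : 0 <= c1 by rewrite /c1 mulr_ge0 // addr_ge0 // mulr_ge0 // mulr_ge0.
set K := g1 * a1 * c ^+ 2.
have K0 : 0 <= K by rewrite /K mulr_ge0 ?sqr_ge0 // mulr_ge0.
set eps' := eps / (2 * (c1 + 1)).
have e'0 : 0 < eps' by rewrite divr_gt0 //; lra.
have e'd : eps' * (2 * (c1 + 1)) = eps by rewrite /eps' divfK //; lra.
have [d' d'0 hd] := hg.2 _ e'0.
exists (Num.min (1 / (c + 1)) (Num.min (d' / (c1 + 1)) (eps / (2 * (K + 1))))).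
  rewrite !lt_min !divr_gt0 //; lra.
move=> X; set H := X - X0; have eX : X = H + X0 by rewrite subrK.
rewrite !lt_min => /andP [h1 /andP [h2 h3]].
set f := fnorm H in h1 h2 h3 *; have f0 : 0 <= f := fnorm_ge0 _.
have {}h1 : f * (c + 1) < 1 by rewrite -ltr_pdivlMr //; lra.
have {}h2 : f * (c1 + 1) < d' by rewrite -ltr_pdivlMr //; lra.
have {}h3 : f * (2 * (K + 1)) < eps by rewrite -ltr_pdivlMr //; lra.
set h := n1 H; have h0 : 0 <= h := n1_ge0 _.
have hh : h <= c * f := n1_le_fnorm H.
have hle1 : h <= 1 by lra.
set Dl := ctr X *m A *m X - W0.
have eD : Dl = ctr X0 *m A *m H + ctr H *m A *m X0 + ctr H *m A *m H.
  rewrite /Dl /W0; have -> : ctr X *m A *m X = ctr (H + X0) *m A *m (H + X0) by rewrite /H subrK.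
  exact: quad_expand.
have hD : is_hermitian Dl by apply: herm_sub; apply: quad_herm.
have nD : n1 Dl <= c1 * f.
  rewrite eD; apply: le_trans (n1D _ _) _.
  have := n1_quad H H A; have := n1_quad X0 H A; have := n1_quad H X0 A.
  have := n1D (ctr X0 *m A *m H) (ctr H *m A *m X0).
  rewrite -/h -/a1 -/x1 /c1 => q1 q2 q3 q4.
  have : (2 * x1 * a1 + a1 * h) * h <= (2 * x1 * a1 + a1) * h.
    have : a1 * h <= a1 by rewrite -[leRHS]mulr1 ler_wpM2l.
    move=> ha; apply: ler_wpM2r => //; lra.
  have : (2 * x1 * a1 + a1) * h <= (2 * x1 * a1 + a1) * (c * f).
    by apply: ler_wpM2l => //; rewrite addr_ge0 // !mulr_ge0.
  lra.
have fD : fnorm Dl < d'.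
  apply: le_lt_trans (fnorm_le_n1 _) _; apply: le_lt_trans nD _; lra.
have := hd _ hD fD.
have -> : W0 + Dl = ctr X *m A *m X by rewrite /Dl addrC subrK.
have -> : complex.Re (\tr (G *m Dl)) = Bf G A X0 H + Bf G A H X0 + Bf G A H H.
  by rewrite eD ReTr3.
have hB : `|Bf G A H H| <= g1 * (h * a1 * h) := Bf_bound G A H H.
have hB2 : g1 * (h * a1 * h) <= K * f ^+ 2.
  have hh2 : h * h <= (c * f) * (c * f) by apply: ler_pM.
  have ga : 0 <= g1 * a1 by rewrite mulr_ge0.
  have -> : g1 * (h * a1 * h) = (g1 * a1) * (h * h) by ring.
  have -> : K * f ^+ 2 = (g1 * a1) * ((c * f) * (c * f)) by rewrite /K; ring.
  exact: ler_wpM2l.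
have fD2 : fnorm Dl <= c1 * f by apply: le_trans (fnorm_le_n1 _) nD.
have fD0 : 0 <= fnorm Dl := fnorm_ge0 _.
move=> hE.
set B := Bf G A H H in hB hB2 hE *.
set E := g (ctr X *m A *m X) - g W0 - (Bf G A X0 H + Bf G A H X0 + B) in hE.
have -> : g (ctr X *m A *m X) - g W0 - (Bf G A X0 H + Bf G A H X0) = E + B.
  by rewrite /E [in RHS]opprD [in RHS]addrA subrK.
apply: le_trans (ler_normD _ _) _.
have q1 : eps' * fnorm Dl <= eps' * (c1 * f) by apply: ler_wpM2l => //; lra.
have q2 : eps' * (c1 * f) <= eps / 2 * f.
  have : eps' * c1 <= eps / 2 by lra.
  move=> hq; rewrite mulrA; exact: ler_wpM2r.
have q3 : K * f ^+ 2 <= eps / 2 * f.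
  have : K * f <= eps / 2 by lra.
  move=> hq; rewrite expr2 mulrA; exact: ler_wpM2r.
lra.
Qed.

Lemma ReTr4 r (G M1 M2 M3 M4 : 'M[C]_r) :
  complex.Re (\tr (G *m (M1 + M2 + M3 - M4))) = complex.Re (\tr (G *m M1))
    + complex.Re (\tr (G *m M2)) + complex.Re (\tr (G *m M3)) - complex.Re (\tr (G *m M4)).
Proof. by rewrite mulmxBr !mulmxDr mxtraceD mxtraceN !mxtraceD ReD ReN !ReD. Qed.

Lemma ReTrB r (G M1 M2 : 'M[C]_r) :
  complex.Re (\tr (G *m (M1 - M2))) = complex.Re (\tr (G *m M1)) - complex.Re (\tr (G *m M2)).
Proof. by rewrite mulmxBr mxtraceD mxtraceN ReD ReN. Qed.

Lemma D_linear n r (G : 'M[C]_r) (A : 'M[C]_n) (X0 : 'M[C]_(n, r)) :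
  real_linear (fun H => Bf G A X0 H + Bf G A H X0).
Proof. by move=> a X Y /=; rewrite BfDr BfZr BfDl BfZl mulrDr addrACA. Qed.


Lemma Bf_exB n r (G : 'M[C]_r) M (X Y : 'M[C]_(n, r)) :
  Bf G M (X - Y) (X - Y) = Bf G M X X - Bf G M X Y - Bf G M Y X + Bf G M Y Y.
Proof.
rewrite !(BfDl, BfDr, BfNl, BfNr).
move: (Bf G M X X) (Bf G M X Y) (Bf G M Y X) (Bf G M Y Y) => a b c d; lra.
Qed.

Lemma Bf_exD n r (G : 'M[C]_r) M (X Y : 'M[C]_(n, r)) :
  Bf G M (X + Y) (X + Y) = Bf G M X X + Bf G M X Y + Bf G M Y X + Bf G M Y Y.
Proof.
rewrite !(BfDl, BfDr).
move: (Bf G M X X) (Bf G M X Y) (Bf G M Y X) (Bf G M Y Y) => a b c d; lra.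
Qed.

Lemma BfC_l n r (G : 'M[C]_r) M (X Y Z : 'M[C]_(n, r)) (t : R) :
  Bf G M (((1 - t)%:C)%C *: X + (t%:C)%C *: Y) Z = (1 - t) * Bf G M X Z + t * Bf G M Y Z.
Proof. by rewrite BfDl !BfZl. Qed.
Lemma BfC_r n r (G : 'M[C]_r) M (X Y Z : 'M[C]_(n, r)) (t : R) :
  Bf G M Z (((1 - t)%:C)%C *: X + (t%:C)%C *: Y) = (1 - t) * Bf G M Z X + t * Bf G M Z Y.
Proof. by rewrite BfDr !BfZr. Qed.

Lemma concave_arith (t nx ny q pxa pya pax pay p0 g0 c0 : R) :
  t * (1 - t) * q <= 0 ->
  (1 - t) * (nx + pxa + pax - p0 + g0 - c0) + t * (ny + pya + pay - p0 + g0 - c0) <=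
  ((1 - t) * nx + t * ny - t * (1 - t) * q) + ((1 - t) * pxa + t * pya)
    + ((1 - t) * pax + t * pay) - p0 + g0 - c0.
Proof.
move=> h.
have e : ((1 - t) * nx + t * ny - t * (1 - t) * q) + ((1 - t) * pxa + t * pya)
    + ((1 - t) * pax + t * pay) - p0 + g0 - c0
  - ((1 - t) * (nx + pxa + pax - p0 + g0 - c0) + t * (ny + pya + pay - p0 + g0 - c0))
  = - (t * (1 - t) * q) by ring.
rewrite -subr_ge0 e; lra.
Qed.

Lemma ii_arith (nx pxx pxa pax p0 g0 n0 gX : R) :
  0 <= pxx - pxa - pax + p0 -> g0 + (pxx + nx) - (p0 + n0) <= gX ->
  nx + pxa + pax - p0 + g0 - (p0 + n0) <= gX.
Proof. lra. Qed.

Lemma iv_arith (nhh nhx nxh nxx phx pxx pxh g0 c0 : R) :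
  nhh + nhx + nxh + nxx + (phx + pxx) + (pxx + pxh) - pxx + g0 - c0
  - (nxx + pxx + pxx - pxx + g0 - c0) - (pxh + nxh + (phx + nhx)) = nhh.
Proof. lra. Qed.

End S.

Unset Implicit Arguments.

Theorem theorem1 (R : realType) (n r : nat) (A U : 'M[R[i]]_n) (lam : 'I_n -> R)
  (g : 'M[R[i]]_r -> R) (mnd : bool) (X0 : 'M[R[i]]_(n, r)) (G : 'M[R[i]]_r) :
  (0 < n)%N -> (0 < r)%N ->
  is_hermitian A -> eigen_decomp A U lam ->
  in_class_G g -> (if mnd then MND g else MNI g) ->
  is_gradient g (ctr X0 *m A *m X0) G ->
  let W0 := ctr X0 *m A *m X0 in
  let l := lmin g mnd (pos_part U lam) (neg_part U lam) X0 W0 G in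
  [/\ (forall X, l X \is Num.real) /\ concave_fun (fun X => complex.Re (l X)),
      (forall X : 'M[R[i]]_(n, r), l X <= ((g (ctr X *m A *m X))%:C)%C),
      l X0 = ((g W0)%:C)%C &
      exists D : 'M[R[i]]_(n, r) -> R,
        frechet_deriv (fun X => complex.Re (l X)) X0 D /\
        frechet_deriv (fun X => g (ctr X *m A *m X)) X0 D].
Proof.
move=> hn hr hA he [_ [hconv _]] hmon hgrad W0 l.
have hG : is_hermitian G := hgrad.1.
have hW0 : is_hermitian W0 := quad_herm X0 hA.
set Ap := pos_part U lam; set An := neg_part U lam.
have hsplit : A = Ap + An := eig_split he.
have hAp : is_hermitian Ap by exact: eig_herm.
have hAn : is_hermitian An by exact: eig_herm.
pose P := if mnd then Ap else An; pose N := if mnd then An else Ap.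
have hPN : A = P + N by rewrite /P /N hsplit; case: (mnd) => //; rewrite addrC.
have hP : is_hermitian P by rewrite /P; case: (mnd).
have hN : is_hermitian N by rewrite /N; case: (mnd).
have QP : forall Y, 0 <= Bf G P Y Y.
  move=> Y; rewrite /P /Bf; case: (mnd) hmon => hm.
    exact: grad_sign_MND hm hgrad hW0 (psd_pos U lam Y).
  have := grad_sign_MNI hm hgrad hW0 (psd_neg U lam Y).
  rewrite mulmxN mxtraceN ReN; lra.
have QN : forall Y, Bf G N Y Y <= 0.
  move=> Y; rewrite /N /Bf; case: (mnd) hmon => hm.
    have := grad_sign_MND hm hgrad hW0 (psd_neg U lam Y).
    rewrite mulmxN mxtraceN ReN; lra.
  exact: grad_sign_MNI hm hgrad hW0 (psd_pos U lam Y).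
have hBA : forall X Y, Bf G A X Y = Bf G P X Y + Bf G N X Y.
  by move=> X Y; rewrite hPN BfDm.
have hL : forall X, Lmx mnd Ap An X0 X =
    ctr X *m N *m X + ctr X *m P *m X0 + ctr X0 *m P *m X - ctr X0 *m P *m X0.
  by move=> X; rewrite /Lmx /P /N; case: (mnd).
have hLh : forall X, is_hermitian (Lmx mnd Ap An X0 X).
  move=> X; rewrite /is_hermitian hL ctrB !ctrD !herm_quad //.
  by congr (_ - _); rewrite addrAC.
have hRe : forall X, complex.Re (l X) = Bf G N X X + Bf G P X X0 + Bf G P X0 X
    - Bf G P X0 X0 + g W0 - (Bf G P X0 X0 + Bf G N X0 X0).
  move=> X; rewrite /l /lmin ReB ReD ReC (hLh X) mxtrace_mulC hL ReTr4.
  by rewrite (mxtrace_mulC W0) -hBA.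
have hIm : forall X, complex.Im (l X) = 0.
  move=> X; rewrite /l /lmin ImB ImD ImC Im_herm_tr ?Im_herm_tr //.
    by rewrite add0r subr0.
  by rewrite (hLh X).
have hcg : forall X, g W0 + (Bf G P X X + Bf G N X X) - (Bf G P X0 X0 + Bf G N X0 X0)
    <= g (ctr X *m A *m X).
  move=> X; have := grad_convex hconv hgrad hW0 (quad_herm X hA).
  by rewrite ReTrB -!/(Bf G A _ _) !hBA addrA.
split.
- split.
    move=> X; rewrite (complex_eqRI (hIm X)); apply/complex_realP; by eexists.
  move=> X Y t /andP [t0 t1] /=; rewrite !hRe.
  rewrite Bf_concave BfC_l BfC_r; apply: concave_arith.
  rewrite -oppr_ge0 -mulrN; apply: mulr_ge0; first by apply: mulr_ge0; lra.
  rewrite oppr_ge0; exact: QN.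
- move=> X; rewrite lecE; apply/andP; split; first by rewrite hIm.
  rewrite hRe ReC; apply: ii_arith (hcg X).
  rewrite -Bf_exB; exact: QP.
- rewrite /l /lmin.
  have -> : Lmx mnd Ap An X0 X0 = W0.
    by rewrite hL addrK /W0 hPN mulmxDr mulmxDl addrC.
  by rewrite hW0 addrC addKr.
exists (fun H => Bf G A X0 H + Bf G A H X0); split; last exact: frechet_comp.
pose c : R := 2 * (n * r)%:R; have c0 : 0 <= c by rewrite mulr_ge0 ?ler0n.
apply: (@frechet_quad _ _ _ _ _ _ (n1 G * n1 N * c ^+ 2) (D_linear G A X0)).
  by rewrite !mulr_ge0 ?n1_ge0 ?sqr_ge0.
have eH : forall H, complex.Re (l (H + X0)) - complex.Re (l X0)
    - (Bf G A X0 H + Bf G A H X0) = Bf G N H H.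
  move=> H; rewrite !hRe !hBA Bf_exD !BfDl !BfDr.
  move: (Bf G N H H) (Bf G N H X0) (Bf G N X0 H) (Bf G N X0 X0) (Bf G P H X0)
    (Bf G P X0 X0) (Bf G P X0 H) (g W0) => a1 a2 a3 a4 a5 a6 a7 a8.
  clear; lra.
move=> X; have := eH (X - X0); rewrite subrK => ->.
set H := X - X0; set f := fnorm H.
have hh : n1 H <= c * f := n1_le_fnorm H.
apply: le_trans (Bf_bound G N H H) _.
have hh2 : n1 H * n1 H <= (c * f) * (c * f) by apply: ler_pM; rewrite ?n1_ge0.
have ga : 0 <= n1 G * n1 N by rewrite mulr_ge0 ?n1_ge0.
have -> : n1 G * (n1 H * n1 N * n1 H) = (n1 G * n1 N) * (n1 H * n1 H) by ring.
have -> : n1 G * n1 N * c ^+ 2 * f ^+ 2 = (n1 G * n1 N) * ((c * f) * (c * f)) by ring.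
exact: ler_wpM2l.
Qed.
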